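(* Let $m\ge 1$ and let $\mathbf A,\mathbf B\in\mathbb R^{m\times m}$, where $\mathbf A$ is Schur stable (spectral radius $\rho(\mathbf A)<1$). Fix a symmetric positive definite matrix $\mathbf C\in\mathbb R^{m\times m}$ and let $\mathbf H=\mathbf H^T$ be the unique positive definite solution of the discrete Lyapunov equation $\mathbf A^T\mathbf H\mathbf A-\mathbf H=-\mathbf C$. Let $c>0$ be the smallest eigenvalue of $\mathbf C$, and let $0<\underline{\eta}\le\overline{\eta}$ be the smallest and largest eigenvalues of $\mathbf H$. Define $$\alpha:=\begin{cases}\dfrac{\big|\,\overline{\eta}-c+|\mathbf A^T\mathbf H\mathbf B|\,\big|}{\overline{\eta}}, & \text{if } c>|\mathbf A^T\mathbf H\mathbf B|,\\[2mm] \dfrac{\big|\,\underline{\eta}-c+|\mathbf A^T\mathbf H\mathbf B|\,\big|}{\underline{\eta}}, & \text{if } c\le|\mathbf A^T\mathbf H\mathbf B|,\end{cases}\qquad \beta:=\underline{\eta}^{-1}\big(|\mathbf A^T\mathbf H\mathbf B|+|\mathbf B^T\mathbf H\mathbf B|\big).$$ Let $\mathcal T\subset\{1,2,3,\dots\}$ be a nonempty set with $\overline{\tau}:=\max_{\tau\in\mathcal T}\tau<\infty$, and let $\tau:\mathbb Z_{\ge 0}\to\mathcal T$, $t\mapsto\tau_t$, be an arbitrary (deterministic) delay sequence. Consider any sequence $(\mathbf x_t)_{t\ge 0}\subset\mathbb R^m$ with arbitrary initial values $\mathbf x_0,\dots,\mathbf x_{\overline{\tau}}$ satisfying $$\mathbf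 x_{t+1}=\mathbf A\,\mathbf x_t+\mathbf B\,\mathbf x_{t-\tau_t}\qquad\text{for all } t\ge\overline{\tau}.$$ If $\alpha+\beta<1$, then $\mathbf x_t\to 0$ exponentially fast as $t\to\infty$, i.e. there exist constants $M>0$ and $\lambda\in(0,1)$ (independent of $t$) such that $\|\mathbf x_t\|\le M\lambda^{t}\max_{0\le s\le\overline{\tau}}\|\mathbf x_s\|$ for all $t\ge 0$.
   Context: Here $|\cdot|$ applied to a matrix denotes the induced (operator) Euclidean norm, and $|\cdot|$ applied to a real number denotes absolute value. In the paper this is applied to the closed-loop mean dynamics of a linear plant with Kalman filter, LQG feedback and an additional delayed state-feedback ''watermarking'' term, where $\mathbf A$ is the LQG closed-loop matrix and $\mathbf B$ the matrix multiplying the delayed state, but the statement is purely about the delayed linear recursion above. *)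

(* Defs.v *)
From mathcomp Require Import all_boot all_order all_algebra.
From mathcomp Require Import classical_sets reals Rstruct complex.
From Stdlib Require Import Rdefinitions.

Set Implicit Arguments.
Unset Strict Implicit.
Unset Printing Implicit Defensive.

Import Order.TTheory GRing.Theory Num.Theory.
Local Open Scope ring_scope.
Local Open Scope classical_set_scope.

Notation R := Rdefinitions.R.

Definition enorm (m : nat) (x : 'cV[R]_m) : R := Num.sqrt (\sum_(i < m) x i 0 ^+ 2).

Definition opnorm (m : nat) (M : 'M[R]_m) : R :=
  sup [set enorm (M *m x) | x in [set x : 'cV[R]_m | enorm x = 1]].

Definition schur_stable (m : nat) (A : 'M[R]_m) : Prop :=
  forall z : R[i], eigenvalue (map_mx (fun r : R => Complex r 0) A) z -> `|z| < 1.

Definition symmetric_mx (m : nat) (M : 'M[R]_m) : Prop := M^T = M.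

Definition pos_def (m : nat) (M : 'M[R]_m) : Prop :=
  symmetric_mx M /\ forall x : 'cV[R]_m, x != 0 -> 0 < (x^T *m M *m x) 0 0.

Definition min_eig (m : nat) (M : 'M[R]_m) (e : R) : Prop :=
  eigenvalue M e /\ forall l, eigenvalue M l -> e <= l.
Definition max_eig (m : nat) (M : 'M[R]_m) (e : R) : Prop :=
  eigenvalue M e /\ forall l, eigenvalue M l -> l <= e.

Definition alpha_coef (c etaL etaU nAHB : R) : R :=
  if nAHB < c then `|etaU - c + nAHB| / etaU else `|etaL - c + nAHB| / etaL.

Definition beta_coef (etaL nAHB nBHB : R) : R := etaL^-1 * (nAHB + nBHB).

Definition init_max (m taubar : nat) (x : nat -> 'cV[R]_m) : R :=
  \big[Num.max/0]_(s < taubar.+1) enorm (x s).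

(* Main.v *)
Require Import Defs.
From mathcomp Require Import all_boot all_order all_algebra.
From mathcomp Require Import classical_sets reals Rstruct complex.
From mathcomp Require Import spectral sesquilinear.
From mathcomp Require Import ring lra.
Import Order.TTheory GRing.Theory Num.Theory Num.Def.
Local Open Scope ring_scope.
Lemma normC2 (z : R[i]) : real_complex R (complex.Re z ^+2 + complex.Im z ^+2) = conjC z * z.
Proof. case: z => a b. apply/eqP; rewrite eq_complex /=. apply/andP; split; apply/eqP; ring. Qed.

Section Spec.
Variable m : nat.
Local Notation fC := (real_complex R).
Local Open Scope sesquilinear_scope.

Lemma spec_decomp (M : 'M[R]_m) : M^T = M ->
  exists d : 'I_m -> R, (forall i, eigenvalue M (d i)) /\
   forall x : 'cV[R]_m, exists w : 'I_m -> R, (forall i, 0 <= w i) /\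
     \sum_i w i = \sum_i x i 0 ^+ 2 /\ (x^T *m M *m x) 0 0 = \sum_i d i * w i.
Proof.
move=> Msym.
pose MC := map_mx fC M.
have herm : MC \is hermsymmx.
  apply/is_hermitianmxP; rewrite expr0 scale1r.
  apply/matrixP=> i j; rewrite !mxE.
  rewrite -{1}Msym mxE; exact/esym/conjc_real.
have /orthomx_spectralP Heq := hermitian_normalmx herm.
have Dreal := hermitian_spectral_diag_real herm.
set P := spectralmx MC in Heq.
set D := spectral_diag MC in Heq Dreal.
have Punit : P \in unitmx by apply: spectral_unit.
have Dr : forall i, D 0 i = fC (complex.Re (D 0 i)).
  move=> i; rewrite RRe_real //; exact: (mxOverP Dreal).
exists (fun i => complex.Re (D 0 i)); split.
  move=> i.
  have PM : P *m MC = diag_mx D *m P.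
    by rewrite {1}Heq !mulmxA mulmxV // mul1mx.
  have ev : eigenvalue MC (D 0 i).
    apply/eigenvalueP; exists (row i P).
      rewrite -row_mul PM mul_diag_mx; apply/rowP => j; rewrite !mxE //.
    apply/eqP => hr.
    have := congr1 (fun v => (v *m invmx P) 0 i) hr.
    rewrite -row_mul mulmxV // mul0mx !mxE eqxx /=.
    by move=> /eqP; rewrite oner_eq0.
  move: ev; rewrite Dr !eigenvalue_root_char -map_char_poly.
  by rewrite fmorph_root.
move=> x.
pose xc := map_mx fC x.
pose y := P *m xc.
exists (fun i => complex.Re (y i 0) ^+ 2 + complex.Im (y i 0) ^+ 2); split.
  by move=> i; rewrite addr_ge0 // sqr_ge0.
have conjx : xc ^t conjC = xc^T.
  by apply/matrixP => i j; rewrite !mxE; exact: conjc_real.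
have yconj : y ^t conjC = xc^T *m P ^t conjC.
  by rewrite /y trmx_mul map_mxM conjx.
have PtP : P ^t conjC *m P = 1%:M.
  by rewrite -invmx_unitary ?spectral_unitarymx // mulVmx.
have wE : forall i, fC (complex.Re (y i 0) ^+ 2 + complex.Im (y i 0) ^+ 2) = (y ^t conjC) 0 i * y i 0.
  by move=> i; rewrite normC2 [in RHS]mxE [in RHS]mxE.
split.
  apply: (@fmorph_inj _ _ fC); rewrite !rmorph_sum /=.
  have -> : \sum_i fC (x i 0 ^+ 2) = (y ^t conjC *m y) 0 0.
    rewrite yconj /y -mulmxA (mulmxA (P ^t conjC)) PtP mul1mx !mxE.
    by apply: eq_bigr => i _; rewrite !mxE rmorphXn expr2.
  by rewrite !mxE; apply: eq_bigr => i _; rewrite wE.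
apply: (@fmorph_inj _ _ fC); rewrite rmorph_sum /=.
have -> : fC ((x^T *m M *m x) 0 0) = (y ^t conjC *m diag_mx D *m y) 0 0.
  rewrite yconj /y.
  have -> : fC ((x^T *m M *m x) 0 0) = (xc^T *m MC *m xc) 0 0.
    by rewrite /xc /MC map_trmx -!map_mxM [RHS]mxE.
  rewrite Heq invmx_unitary ?spectral_unitarymx // !mulmxA.
  by [].
rewrite mul_mx_diag [LHS]mxE; apply: eq_bigr => i _.
rewrite rmorphM /= wE -Dr !mxE; ring.
Qed.
End Spec.
Section Norms.
Context {m : nat}.
Implicit Types x y z : 'cV[R]_m.
Definition nsq x : R := \sum_i x i 0 ^+ 2.
Definition dotv x z : R := (x^T *m z) 0 0.

Lemma nsq_ge0 x : 0 <= nsq x.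
Proof. by apply: sumr_ge0 => i _; rewrite sqr_ge0. Qed.

Lemma enorm_ge0 x : 0 <= enorm x.
Proof. exact: sqrtr_ge0. Qed.

Lemma enorm_sq x : enorm x ^+ 2 = nsq x.
Proof. by rewrite /enorm sqr_sqrtr // nsq_ge0. Qed.

Lemma dotvE x z : dotv x z = \sum_i x i 0 * z i 0.
Proof. by rewrite /dotv mxE; apply: eq_bigr => i _; rewrite mxE. Qed.

Lemma two_dot x z s : 0 < s -> 2 * dotv x z <= s * nsq x + nsq z / s.
Proof.
move=> s0.
have H : 0 <= s ^+ 2 * nsq x - 2 * s * dotv x z + nsq z.
  have -> : s ^+ 2 * nsq x - 2 * s * dotv x z + nsq z
      = \sum_i (s * x i 0 - z i 0) ^+ 2.
    rewrite dotvE /nsq !mulr_sumr -sumrN -!big_split /=.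
    by apply: eq_bigr => i _; ring.
  by apply: sumr_ge0 => i _; rewrite sqr_ge0.
have sn : s != 0 by rewrite gt_eqF.
have hs : s * s^-1 = 1 by rewrite mulfV.
have si : 0 <= s^-1 by rewrite invr_ge0 ltW.
have := mulr_ge0 H si.
set t := s^-1 in hs si *.
have -> : (s ^+ 2 * nsq x - 2 * s * dotv x z + nsq z) * t
   = (s * nsq x - 2 * dotv x z) * (s * t) + nsq z * t by ring.
rewrite hs mulr1 => HH; lra.
Qed.

Lemma nsq0_eq x : nsq x = 0 -> forall i, x i 0 = 0.
Proof.
move=> h i.
have h2 := @psumr_eq0P _ _ predT (fun j => x j 0 ^+ 2) (fun j _ => sqr_ge0 _) h.
apply/eqP; rewrite -sqrf_eq0; apply/eqP; exact: h2.
Qed.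

Lemma enorm0 : enorm (0 : 'cV[R]_m) = 0.
Proof. rewrite /enorm big1 ?sqrtr0 // => i _; by rewrite mxE expr0n. Qed.

Lemma enormZ (k : R) x : enorm (k *: x) = `|k| * enorm x.
Proof.
rewrite /enorm.
have -> : \sum_i (k *: x) i 0 ^+ 2 = k ^+ 2 * \sum_i x i 0 ^+ 2.
  by rewrite mulr_sumr; apply: eq_bigr => i _; rewrite mxE exprMn.
by rewrite sqrtrM ?sqr_ge0 // sqrtr_sqr.
Qed.

Lemma enorm_eq0 x : enorm x = 0 -> x = 0.
Proof.
move=> h; have h2 : nsq x = 0 by rewrite -enorm_sq h expr0n.
apply/matrixP => i j; rewrite (ord1 j) mxE; exact: nsq0_eq.
Qed.

Lemma entry_le x i : `|x i 0| <= enorm x.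
Proof.
rewrite -sqrtr_sqr /enorm ler_sqrt ?nsq_ge0 //.
rewrite (bigD1 i) //= lerDl; apply: sumr_ge0 => j _; exact: sqr_ge0.
Qed.
End Norms.
Section Op.
Context {m : nat}.
Implicit Types x y z : 'cV[R]_m.

Lemma opnorm_has_sup (N : 'M[R]_m) x0 : enorm x0 = 1 ->
  has_sup [set enorm (N *m x) | x in [set x : 'cV[R]_m | enorm x = 1]].
Proof.
move=> h0; split; first by exists (enorm (N *m x0)); exists x0.
pose K i := \sum_j `|N i j|.
exists (Num.sqrt (\sum_i K i ^+ 2)).
move=> _ [x hx <-].
rewrite /enorm ler_sqrt; last by apply: sumr_ge0 => i _; exact: sqr_ge0.
apply: ler_sum => i _.
have a : `|(N *m x) i 0| <= K i.
  rewrite mxE; apply: le_trans (ler_norm_sum _ _ _) _.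
  apply: ler_sum => j _; rewrite normrM.
  have := entry_le x j; rewrite hx => hj.
  by rewrite -{2}(mulr1 `|N i j|) ler_wpM2l.
have b : 0 <= `|(N *m x) i 0| by [].
rewrite -real_normK ?num_real //; nra.
Qed.

Lemma opnorm_bound (N : 'M[R]_m) x : enorm (N *m x) <= opnorm N * enorm x.
Proof.
have [->|xn0] := eqVneq x 0.
  by rewrite mulmx0 enorm0 mulr0.
have e0 : enorm x != 0 by apply/eqP => /enorm_eq0; apply/eqP.
have ep : 0 < enorm x by rewrite lt_def e0 enorm_ge0.
pose u := (enorm x)^-1 *: x.
have hu : enorm u = 1 by rewrite enormZ ger0_norm ?invr_ge0 ?enorm_ge0 // mulVf.
have := sup_upper_bound (opnorm_has_sup N u hu).
move=> /ubP /(_ (enorm (N *m u))) hs.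
have : enorm (N *m u) <= opnorm N by apply: hs; exists u.
rewrite /u -scalemxAr enormZ ger0_norm ?invr_ge0 ?enorm_ge0 //.
by rewrite -(ler_pM2l ep) mulrA mulfV // mul1r mulrC.
Qed.

Lemma opnorm_ge0 (hm : (0 < m)%N) (N : 'M[R]_m) : 0 <= opnorm N.
Proof.
pose e := delta_mx (Ordinal hm) (0 : 'I_1) : 'cV[R]_m.
have he : enorm e = 1.
  rewrite /enorm (bigD1 (Ordinal hm)) //= big1 ?addr0 ?mxE ?eqxx ?expr1n ?sqrtr1 //.
  by move=> i hi; rewrite mxE (negbTE hi) /= expr0n.
have := opnorm_bound N e; rewrite he mulr1 => h; exact: le_trans (enorm_ge0 _) h.
Qed.

Lemma cross_bound (hm : (0 < m)%N) (N : 'M[R]_m) x y :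
  2 * (x^T *m N *m y) 0 0 <= opnorm N * (nsq x + nsq y).
Proof.
have n0 := opnorm_ge0 hm N.
have hz := opnorm_bound N y.
set n := opnorm N in n0 hz *.
set z := N *m y in hz.
have hz2 : nsq z <= n ^+ 2 * nsq y.
  rewrite -!enorm_sq -exprMn; have := enorm_ge0 z; nra.
rewrite -mulmxA -/z -/(dotv x z).
have [nz|np] := eqVneq n 0.
  have : nsq z = 0 by apply/le_anti; rewrite nsq_ge0 andbT; move: hz2; rewrite nz expr0n mul0r.
  move/nsq0_eq => hz0; rewrite dotvE big1 ?mulr0 ?nz ?mul0r // => i _; by rewrite hz0 mulr0.
have npos : 0 < n by rewrite lt_def np n0.
apply: le_trans (two_dot x z n npos) _.
rewrite mulrDr lerD2l ler_pdivrMr //.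
by have -> : n * nsq y * n = n ^+ 2 * nsq y by ring.
Qed.
End Op.
Lemma bern (h : R) n : 0 <= h -> h <= 1 -> 1 - n%:R * h <= (1 - h) ^+ n.
Proof.
move=> h0 h1; elim: n => [|n IH]; first by rewrite mul0r subr0 expr0.
rewrite exprSr -natr1.
have p : 0 <= 1 - h by lra.
have := ler_wpM2r p IH.
have : 0 <= n%:R * h * h by rewrite !mulr_ge0.
nra.
Qed.

Lemma halanay (v : nat -> R) (al be M0 : R) (taubar : nat) (tau : nat -> nat) :
  (0 < taubar)%N -> 0 <= al -> 0 <= be -> al + be < 1 ->
  (forall t, 0 <= v t) -> (forall t, (tau t <= taubar)%N) ->
  (forall s, (s <= taubar)%N -> v s <= M0) ->
  (forall t, (taubar <= t)%N -> v t.+1 <= al * v t + be * v (t - tau t)%N) ->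
  exists lam : R, 0 < lam < 1 /\ forall t, lam ^+ taubar * v t <= M0 * lam ^+ t.
Proof.
move=> tb0 al0 be0 q1 v0 htau hM hrec.
set q := al + be in q1.
have q0 : 0 <= q by rewrite addr_ge0.
pose k : R := (taubar.+1)%:R.
have k1 : 1 <= k by rewrite ler1n.
have kp : 0 < k by lra.
pose h := (1 - q) / k.
have hk : h * k = 1 - q by rewrite /h mulfVK // gt_eqF.
have h0 : 0 < h by rewrite divr_gt0 // subr_gt0.
have h1 : h <= 1 by rewrite ler_pdivrMr //; lra.
pose lam := 1 - h.
have lamq : q <= lam ^+ taubar.+1.
  have := bern h taubar.+1 (ltW h0) h1; rewrite -/k mulrC hk. lra.
have lam1 : lam < 1 by rewrite /lam; lra.
have lam0 : 0 < lam.
  have k2 : 2 <= k by rewrite /k ler_nat ltnS.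
  have : h * k <= 1 by rewrite hk; lra.
  rewrite /lam; nra.
have M00 : 0 <= M0 by apply: le_trans (v0 0%N) (hM 0%N _).
have lam0' : 0 <= lam by lra.
have lam1' : lam <= 1 by lra.
exists lam; split; first by rewrite lam0 lam1.
elim/ltn_ind => t IH.
have [tle|tgt] := leqP t taubar.
  apply: le_trans (_ : lam ^+ t * v t <= _).
    by rewrite ler_wpM2r // ler_wiXn2l.
  by rewrite mulrC ler_wpM2r ?exprn_ge0 // hM.
case: t IH tgt => [|t'] IH tgt; first by [].
have tb : (taubar <= t')%N by [].
have ihA := IH t' (ltnSn t').
have ihB := IH (t' - tau t')%N (leq_ltn_trans (leq_subr _ _) (ltnSn t')).
have pw : lam ^+ t' <= lam ^+ (t' - taubar).
  by rewrite ler_wiXn2l // leq_subr.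
have pw2 : lam ^+ (t' - tau t') <= lam ^+ (t' - taubar).
  by rewrite ler_wiXn2l // leq_sub2l.
have ltb : lam ^+ t'.+1 = lam ^+ taubar.+1 * lam ^+ (t' - taubar).
  by rewrite -exprD addSn subnKC.
have hr := hrec t' tb.
have lt0 : 0 <= lam ^+ taubar by rewrite exprn_ge0.
have e1 : lam ^+ taubar * v t'.+1 <= al * (lam ^+ taubar * v t') + be * (lam ^+ taubar * v (t' - tau t')%N).
  have := ler_wpM2l lt0 hr; lra.
have e2 : al * (lam ^+ taubar * v t') <= al * (M0 * lam ^+ (t' - taubar)).
  rewrite ler_wpM2l //; apply: le_trans ihA _; by rewrite ler_wpM2l.
have e3 : be * (lam ^+ taubar * v (t' - tau t')%N) <= be * (M0 * lam ^+ (t' - taubar)).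
  rewrite ler_wpM2l //; apply: le_trans ihB _; by rewrite ler_wpM2l.
have e4 : q * (M0 * lam ^+ (t' - taubar)) <= lam ^+ taubar.+1 * (M0 * lam ^+ (t' - taubar)).
  by rewrite ler_wpM2r // mulr_ge0 // exprn_ge0.
rewrite ltb.
have -> : M0 * (lam ^+ taubar.+1 * lam ^+ (t' - taubar)) = lam ^+ taubar.+1 * (M0 * lam ^+ (t' - taubar)) by ring.
rewrite /q in e4; lra.
Qed.

Lemma expand_q m (A B H : 'M[R]_m) (z w : 'cV[R]_m) : H^T = H ->
  (A *m z + B *m w)^T *m H *m (A *m z + B *m w) =
  z^T *m (A^T *m H *m A) *m z + z^T *m (A^T *m H *m B) *m w
  + (z^T *m (A^T *m H *m B) *m w)^T + w^T *m (B^T *m H *m B) *m w.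
Proof.
move=> Hs.
have tD : (A *m z + B *m w)^T = z^T *m A^T + w^T *m B^T.
  apply/matrixP => i j; rewrite !mxE; congr (_ + _); apply: eq_bigr => k _; by rewrite !mxE mulrC.
rewrite tD !mulmxDl !mulmxDr.
have tC : (z^T *m (A^T *m H *m B) *m w)^T = w^T *m B^T *m H *m A *m z.
  by rewrite !trmx_mul !trmxK Hs !mulmxA.
by rewrite tC !mulmxA !addrA.
Qed.

Lemma aux_alpha (Vz s k e : R) : 0 < e -> 0 <= Vz -> k * s <= k * (Vz / e) ->
  Vz + k * s <= `|e + k| / e * Vz.
Proof.
move=> e0 V0 h.
have E : Vz + k * (Vz / e) = (e + k) / e * Vz.
  by field; rewrite gt_eqF.
apply: le_trans (_ : Vz + k * (Vz / e) <= _); first by lra.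
rewrite E; apply: ler_wpM2r => //; apply: ler_wpM2r; [by rewrite invr_ge0 ltW | exact: ler_norm].
Qed.

Lemma quad_lb m (M : 'M[R]_m) e : M^T = M -> min_eig M e ->
  forall x, e * nsq x <= (x^T *m M *m x) 0 0.
Proof.
move=> hs [_ he] x; have [d [hd hw]] := @spec_decomp _ M hs.
have [w [w0 [ws ->]]] := hw x.
rewrite /nsq -ws mulr_sumr; apply: ler_sum => i _; apply: ler_wpM2r; [exact: w0|exact: he].
Qed.

Lemma quad_ub m (M : 'M[R]_m) e : M^T = M -> max_eig M e ->
  forall x, (x^T *m M *m x) 0 0 <= e * nsq x.
Proof.
move=> hs [_ he] x; have [d [hd hw]] := @spec_decomp _ M hs.
have [w [w0 [ws ->]]] := hw x.
rewrite /nsq -ws mulr_sumr; apply: ler_sum => i _; apply: ler_wpM2r; [exact: w0|exact: he].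
Qed.

Lemma eig_pos m (M : 'M[R]_m) e : pos_def M -> eigenvalue M e -> 0 < e.
Proof.
move=> [_ hp] /eigenvalueP [v hv vn0].
have xn0 : v^T != 0.
  by apply: contra vn0 => /eqP h; rewrite -(trmxK v) h trmx0.
have := hp _ xn0; rewrite trmxK hv -scalemxAl mxE.
have : 0 <= (v *m v^T) 0 0.
  rewrite mxE; apply: sumr_ge0 => i _; rewrite mxE -expr2; exact: sqr_ge0.
nra.
Qed.

Theorem theorem1 (m : nat) (hm : (0 < m)%N) (A B C H : 'M[R]_m)
  (hA : schur_stable A)
  (hC : pos_def C)
  (hH : pos_def H)
  (hLyap : A^T *m H *m A - H = - C)
  (c etaL etaU : R)
  (hc : min_eig C c) (hetaL : min_eig H etaL) (hetaU : max_eig H etaU)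
  (T : pred nat) (taubar : nat)
  (hT : forall s, T s -> (1 <= s <= taubar)%N) (hTmax : T taubar)
  (hab : alpha_coef c etaL etaU (opnorm (A^T *m H *m B))
         + beta_coef etaL (opnorm (A^T *m H *m B)) (opnorm (B^T *m H *m B)) < 1) :
  forall (tau : nat -> nat), (forall t, T (tau t)) ->
  forall x : nat -> 'cV[R]_m,
    (forall t, (taubar <= t)%N -> x t.+1 = A *m x t + B *m x (t - tau t)%N) ->
    exists (M lam : R), 0 < M /\ 0 < lam < 1 /\
      forall t, enorm (x t) <= M * lam ^+ t * init_max taubar x.
Proof.
move=> tau htau x hrec.
have [Hs Hp] := hH; have [Cs _] := hC.
pose V := fun z : 'cV[R]_m => (z^T *m H *m z) 0 0.
have etaLp : 0 < etaL := @eig_pos _ _ _ hH hetaL.1.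
have etaLU : etaL <= etaU := hetaL.2 _ hetaU.1.
have Vlb z : etaL * nsq z <= V z := @quad_lb _ _ _ Hs hetaL z.
have Vub z : V z <= etaU * nsq z := @quad_ub _ _ _ Hs hetaU z.
have clb z : c * nsq z <= (z^T *m C *m z) 0 0 := @quad_lb _ _ _ Cs hc z.
have V0 z : 0 <= V z by apply: le_trans (Vlb z); rewrite mulr_ge0 ?nsq_ge0 // ltW.
have n0 := opnorm_ge0 hm (A^T *m H *m B).
have b0 := opnorm_ge0 hm (B^T *m H *m B).
set n := opnorm (A^T *m H *m B) in hab n0.
set b := opnorm (B^T *m H *m B) in hab b0.
set al := alpha_coef c etaL etaU n in hab.
set be := beta_coef etaL n b in hab.
have etaUp : 0 < etaU by lra.
have al0 : 0 <= al.
  by rewrite /al /alpha_coef; case: ifP => _; rewrite divr_ge0 // ltW.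
have be0 : 0 <= be by rewrite /be /beta_coef mulr_ge0 ?invr_ge0 ?addr_ge0 // ltW.
have hAHA : A^T *m H *m A = H - C.
  by rewrite -[LHS](subrK H) hLyap addrC.
have ent1 (P Q : 'M[R]_1) : (P + Q) 0 0 = P 0 0 + Q 0 0 by rewrite mxE.
have expand z w : V (A *m z + B *m w) = V z - (z^T *m C *m z) 0 0
     + 2 * (z^T *m (A^T *m H *m B) *m w) 0 0 + (w^T *m (B^T *m H *m B) *m w) 0 0.
  rewrite /V expand_q // hAHA mulmxBr mulmxBl !ent1 [(_^T) 0 0]mxE mxE.
  have ent2 (P : 'M[R]_1) : (- P) 0 0 = - P 0 0 by rewrite mxE.
  rewrite ent2; ring.
have step z w : V (A *m z + B *m w) <= al * V z + be * V w.
  rewrite expand.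
  have hx := cross_bound hm (A^T *m H *m B) z w.
  have hy := cross_bound hm (B^T *m H *m B) w w.
  rewrite -/n -/b !mulrDr in hx hy.
  have kpart : V z + (n - c) * nsq z <= al * V z.
    rewrite /al /alpha_coef; case: ifP => hnc.
      have -> : etaU - c + n = etaU + (n - c) by ring.
      apply: aux_alpha => //.
      rewrite ler_wnM2l ?subr_le0 ?(ltW hnc) //.
      by rewrite ler_pdivrMr // mulrC.
    have -> : etaL - c + n = etaL + (n - c) by ring.
    apply: aux_alpha => //.
    have hnc' : 0 <= n - c by move: hnc => /negbT; rewrite -leNgt subr_ge0.
    rewrite ler_wpM2l //.
    by rewrite ler_pdivlMr // mulrC.
  have bpart : (n + b) * nsq w <= be * V w.
    apply: le_trans (_ : (n + b) * (V w / etaL) <= _).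
      by rewrite ler_wpM2l ?addr_ge0 // ler_pdivlMr // mulrC.
    have -> : be = etaL^-1 * (n + b) by [].
    by rewrite le_eqVlt; apply/orP; left; apply/eqP; ring.
  have := clb z; rewrite mulrBl in kpart; rewrite mulrDl in bpart.
  move=> hc'; lra.
have tb0 : (0 < taubar)%N by have /andP[] := hT _ hTmax.
set I := init_max taubar x.
have I0 : 0 <= I.
  rewrite /I /init_max; apply: le_trans (enorm_ge0 (x 0%N)) _.
  exact: (le_bigmax 0 (fun s : 'I_taubar.+1 => enorm (x s)) ord0).
have hM s : (s <= taubar)%N -> V (x s) <= etaU * I ^+ 2.
  move=> hs; apply: le_trans (Vub _) _; apply: ler_wpM2l; first exact: ltW.
  rewrite -enorm_sq.
  have h1 : enorm (x s) <= I.
    exact: (le_bigmax 0 (fun s : 'I_taubar.+1 => enorm (x s)) (Ordinal (n:=taubar.+1) (m:=s) hs)).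
  have := enorm_ge0 (x s); nra.
have htb t : (tau t <= taubar)%N by case/andP: (hT _ (htau t)).
have [lam [/andP[lam0 lam1] hb]] := halanay (fun t => V (x t)) al be (etaU * I ^+ 2) taubar tau tb0 al0 be0 hab (fun t => V0 (x t)) htb hM
   (fun t ht => eq_ind_r (fun u => V u <= _) (step _ _) (hrec t ht)).
pose K := etaU / (etaL * lam ^+ taubar).
have lt0 : 0 < lam ^+ taubar by rewrite exprn_gt0.
have K0 : 0 < K by rewrite divr_gt0 // mulr_gt0.
exists (Num.sqrt K), (Num.sqrt lam); split; first by rewrite sqrtr_gt0.
split.
  by rewrite sqrtr_gt0 lam0 /= -sqrtr1 ltr_sqrt // ltr01.
move=> t.
have ns : nsq (x t) <= K * (I * Num.sqrt lam ^+ t) ^+ 2.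
  have e1 := hb t.
  have e2 := Vlb (x t).
  have e3 : etaL * lam ^+ taubar * nsq (x t) <= etaU * I ^+ 2 * lam ^+ t.
    have e4 : lam ^+ taubar * (etaL * nsq (x t)) <= lam ^+ taubar * V (x t).
      by apply: ler_wpM2l => //; exact: ltW.
    have -> : etaL * lam ^+ taubar * nsq (x t) = lam ^+ taubar * (etaL * nsq (x t)) by ring.
    exact: le_trans e4 e1.
  have l0 : 0 <= lam by exact: ltW.
  rewrite exprMn -exprM mulnC exprM sqr_sqrtr //.
  have -> : K * (I ^+ 2 * lam ^+ t) = (etaU * I ^+ 2 * lam ^+ t) / (etaL * lam ^+ taubar).
    by rewrite /K; ring.
  rewrite ler_pdivlMr ?mulr_gt0 //.
  by have -> : nsq (x t) * (etaL * lam ^+ taubar) = etaL * lam ^+ taubar * nsq (x t) by ring.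
rewrite /enorm -/(nsq (x t)).
have hr : 0 <= Num.sqrt K * I * Num.sqrt lam ^+ t.
  by apply: mulr_ge0; [apply: mulr_ge0; [exact: sqrtr_ge0|exact: I0]|exact: exprn_ge0 (sqrtr_ge0 _)].
apply: le_trans (_ : Num.sqrt (nsq (x t)) <= Num.sqrt ((Num.sqrt K * I * Num.sqrt lam ^+ t) ^+ 2)) _; last first.
  by rewrite sqrtr_sqr (ger0_norm hr) mulrAC.
rewrite ler_sqrt ?sqr_ge0 //.
apply: le_trans ns _.
rewrite !exprMn sqr_sqrtr; last exact: ltW.
by rewrite mulrA.
Qed.
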